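(* Let $\mathbb{S}$ be a collection of subsets of $\{1,\dots,m\}$, each of size $l$, and let $t$ be a positive integer. Then $$\frac{1}{|\mathbb{S}|^2}\sum_{\mathcal{J},\mathcal{J}'\in\mathbb{S}}|\mathcal{J}\cap\mathcal{J}'|^t\ \ge\ \mathrm{tr}(D_{t,l,m}^2),$$ and equality holds if and only if $\mathbb{S}$ is a $t$-$(m,l,\lambda)$ block design with $\lambda=|\mathbb{S}|\,\mathrm{tr}\big(D_{t,l,m}\bigotimes_{s=1}^tE_{s,s}\big)$.
   Context: Let $\{e_j\}_{j=1}^m$ be the canonical basis of $\mathbb{F}^m$ ($\mathbb{F}=\mathbb{R}$ or $\mathbb{C}$) and $E_{s,s}=e_s\otimes e_s^*$. For $\mathcal{J}\subset\{1,\dots,m\}$ let $D_{\mathcal{J}}=\sum_{j\in\mathcal{J}}E_{j,j}$. The diagonal coherence tensor is $D_{t,l,m}=\binom{m}{l}^{-1}\sum_{\mathcal{J}\in\mathbb{J}}D_{\mathcal{J}}^{\otimes t}$, where $\mathbb{J}$ is the set of all $l$-element subsets of $\{1,\dots,m\}$ and $^{\otimes t}$ is the $t$-fold Kronecker product. A $t$-$(m,l,\lambda)$ block design is a collection of subsets (blocks) of $\{1,\dots,m\}$, each of cardinality $l$, such that every $t$-element subset of $\{1,\dots,m\}$ is contained in exactly $\lambda$ blocks. *)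

(* Defs.v *)
From mathcomp Require Import all_boot all_order all_algebra.
From mathcomp Require Import mxtens.
Set Implicit Arguments.
Unset Strict Implicit.
Unset Printing Implicit Defensive.
Import Order.TTheory GRing.Theory Num.Theory.
Local Open Scope ring_scope.

(* Size of a t-fold Kronecker power of m x m matrices: m^t,
   computed so that kdim m t.+1 = kdim m t * m definitionally. *)
Fixpoint kdim (m t : nat) : nat :=
  if t is t'.+1 then (kdim m t' * m)%N else 1%N.

Fixpoint kron_prod (R : pzRingType) (m : nat) (A : nat -> 'M[R]_m) (t : nat)
  : 'M[R]_(kdim m t) :=
  if t is t'.+1 then tensmx (kron_prod A t') (A t) else 1%:M.

Definition kron_pow (R : pzRingType) (m : nat) (A : 'M[R]_m) (t : nat) :=
  kron_prod (fun _ => A) t.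

(* E_{s,s} = e_s (x) e_s^*, with 1-based index s (entry (s-1,s-1) in 'I_m). *)
Definition Ess (R : pzRingType) (m s : nat) : 'M[R]_m :=
  \matrix_(i, j) ((i == j) && (nat_of_ord i == s.-1))%:R.

Definition DJ (R : pzRingType) (m : nat) (J : {set 'I_m}) : 'M[R]_m :=
  \matrix_(i, j) ((i == j) && (i \in J))%:R.

Definition Dcoh (R : fieldType) (t l m : nat) : 'M[R]_(kdim m t) :=
  ('C(m, l)%:R)^-1 *: \sum_(J : {set 'I_m} | #|J| == l) kron_pow (DJ R J) t.

(* t-(m,l,lambda) block design; blocks given as a sequence (repeated blocks
   allowed, as is standard in design theory). *)
Definition is_block_design (m t l lambda : nat) (S : seq {set 'I_m}) : Prop :=
  (forall B, B \in S -> #|B| = l) /\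
  (forall T : {set 'I_m}, #|T| = t -> count (fun B : {set 'I_m} => T \subset B) S = lambda).

(* Main.v *)
Require Import Defs.
From mathcomp Require Import all_boot all_order all_algebra all_fingroup.
From mathcomp Require Import mxtens ring.
Set Implicit Arguments. Unset Strict Implicit. Unset Printing Implicit Defensive.
Import Order.TTheory GRing.Theory Num.Theory.
Local Open Scope ring_scope.


Section Idx.
Variable m : nat.

Fixpoint crd (t : nat) : 'I_(kdim m t) -> seq 'I_m :=
  match t return 'I_(kdim m t) -> seq 'I_m with
  | 0 => fun _ => [::]
  | t'.+1 => fun x => rcons (@crd t' (mxtens_unindex x).1) (mxtens_unindex x).2
  end.

Fixpoint Qf (P : nat -> pred 'I_m) (t : nat) : 'I_(kdim m t) -> bool :=
  match t return 'I_(kdim m t) -> bool with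
  | 0 => fun _ => true
  | t'.+1 => fun x => @Qf P t' (mxtens_unindex x).1 && P t'.+1 (mxtens_unindex x).2
  end.

Fixpoint pidx (s : {perm 'I_m}) (t : nat) : 'I_(kdim m t) -> 'I_(kdim m t) :=
  match t return 'I_(kdim m t) -> 'I_(kdim m t) with
  | 0 => fun x => x
  | t'.+1 => fun x => mxtens_index (@pidx s t' (mxtens_unindex x).1, s (mxtens_unindex x).2)
  end.

Definition sp t (x : 'I_(kdim m t)) : {set 'I_m} := [set i in crd x].

Lemma size_crd t (x : 'I_(kdim m t)) : size (crd x) = t.
Proof. by elim: t x => [|t IH] x //=; rewrite size_rcons IH. Qed.

Lemma crdS t (x : 'I_(kdim m t.+1)) :
  crd x = rcons (crd (mxtens_unindex x).1) (mxtens_unindex x).2.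
Proof. by []. Qed.

Lemma QfS P t (x : 'I_(kdim m t.+1)) :
  Qf P x = Qf P (mxtens_unindex x).1 && P t.+1 (mxtens_unindex x).2.
Proof. by []. Qed.

Lemma pidxS s t (x : 'I_(kdim m t.+1)) :
  pidx s x = mxtens_index (pidx s (mxtens_unindex x).1, s (mxtens_unindex x).2).
Proof. by []. Qed.

Lemma crd_inj t : injective (@crd t).
Proof.
elim: t => [|t IH] x y.
  by move=> _; apply: val_inj; case: x => [[]] //; case: y => [[]].
rewrite !crdS; move/eqP; rewrite eqseq_rcons => /andP[/eqP/IH h1 /eqP h2].
apply: (can_inj (@mxtens_unindexK _ _)).
by rewrite [mxtens_unindex x]surjective_pairing [mxtens_unindex y]surjective_pairing h1 h2.
Qed.

Lemma crd_surj t (w : seq 'I_m) : size w = t -> exists x : 'I_(kdim m t), crd x = w.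
Proof.
elim: t w => [|t IH] w.
  move/size0nil => ->. by exists (Ordinal (ltnSn 0)).
case/lastP: w => [//|w a]; rewrite size_rcons => -[/IH [x Hx]].
exists (mxtens_index (x, a)). by rewrite crdS mxtens_indexK /= Hx.
Qed.

Lemma Qf_mem (A : {set 'I_m}) t (x : 'I_(kdim m t)) :
  Qf (fun _ i => i \in A) x = (sp x \subset A).
Proof.
rewrite /sp; elim: t x => [|t IH] x.
  by apply/esym/subsetP => i; rewrite inE.
rewrite QfS crdS IH; apply/andP/subsetP.
  by case=> /subsetP h ha i; rewrite inE mem_rcons inE => /orP[/eqP->//|hi]; apply: h; rewrite inE.
move=> h; split; last by apply: h; rewrite inE mem_rcons mem_head.
by apply/subsetP => i; rewrite inE => hi; apply: h; rewrite inE mem_rcons inE hi orbT.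
Qed.

Lemma Qf_ess t (x : 'I_(kdim m t)) :
  Qf (fun s (i : 'I_m) => nat_of_ord i == s.-1) x = (map val (crd x) == iota 0 t).
Proof.
elim: t x => [|t IH] x.
  by [].
have -> : iota 0 t.+1 = rcons (iota 0 t) t by rewrite -cats1 -addn1 iotaD.
by rewrite QfS crdS IH map_rcons eqseq_rcons.
Qed.

Lemma crd_pidx s t (x : 'I_(kdim m t)) : crd (pidx s x) = map s (crd x).
Proof. by elim: t x => [|t IH] x //; rewrite pidxS !crdS mxtens_indexK /= IH map_rcons. Qed.

Lemma pidx_inj s t : injective (@pidx s t).
Proof. by move=> x y h; apply: crd_inj; apply: (inj_map (@perm_inj _ s)); rewrite -!crd_pidx h. Qed.

Lemma sp_pidx s t (x : 'I_(kdim m t)) : sp (pidx s x) = s @: sp x.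
Proof.
apply/setP => i; rewrite /sp !inE crd_pidx.
apply/idP/imsetP => [/mapP [j hj ->]|[j hj ->]]; first by exists j; rewrite ?inE.
by apply: map_f; rewrite inE in hj.
Qed.

End Idx.


Lemma kron_diag (R : pzRingType) m (A : nat -> 'M[R]_m) (P : nat -> pred 'I_m) t :
  (forall s, A s = \matrix_(i, j) ((i == j) && P s i)%:R) ->
  kron_prod A t = \matrix_(x, y) ((x == y) && Qf P x)%:R.
Proof.
move=> hA; elim: t => [|t IH].
  by apply/matrixP => x y; rewrite !mxE andbT.
have -> : kron_prod A t.+1 = tensmx (kron_prod A t) (A t.+1) by [].
rewrite IH hA; apply/matrixP => x y; rewrite !mxE QfS -natrM -mulnb.
rewrite -(inj_eq (can_inj (@mxtens_unindexK _ _))) [mxtens_unindex x]surjective_pairing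
  [mxtens_unindex y]surjective_pairing xpair_eqE /=.
by move: (Qf P _) (P t.+1 _) => q p; do 2 case: eqP => _; case: q; case: p.
Qed.

Lemma tr_diag (R : comPzRingType) n (a b : 'I_n -> R) :
  \tr ((\matrix_(x, y) ((x == y)%:R * a x)) *m (\matrix_(x, y) ((x == y)%:R * b x)))
  = \sum_x a x * b x.
Proof.
rewrite /mxtrace; apply: eq_bigr => x _; rewrite mxE (bigD1 x) //= big1 ?addr0.
  by rewrite !mxE eqxx !mul1r.
by move=> y hy; rewrite !mxE eq_sym (negbTE hy) mul0r mul0r.
Qed.

Definition gco (R : fieldType) m t l (x : 'I_(kdim m t)) : R :=
  ('C(m, l)%:R)^-1 * \sum_(J : {set 'I_m} | #|J| == l) (sp x \subset J)%:R.

Lemma DcohE (R : fieldType) t l m :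
  Dcoh R t l m = \matrix_(x, y) ((x == y)%:R * gco R l x).
Proof.
apply/matrixP => x y; rewrite /Dcoh !mxE summxE /gco mulrCA; congr (_ * _).
under eq_bigr => J _ do
  rewrite /kron_pow (@kron_diag _ _ _ (fun _ i => i \in J)) // mxE Qf_mem.
case: eqP => _; first by rewrite mul1r.
by rewrite mul0r big1.
Qed.

Lemma EssE (R : pzRingType) m t :
  kron_prod (fun s => Ess R m s) t =
  \matrix_(x, y) ((x == y)%:R * (map val (crd x) == iota 0 t)%:R).
Proof.
rewrite (@kron_diag _ _ _ (fun s (i : 'I_m) => nat_of_ord i == s.-1)) //.
by apply/matrixP => x y; rewrite !mxE Qf_ess -mulnb natrM.
Qed.

Lemma card_sp (R : pzRingType) m t (A : {set 'I_m}) :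
  \sum_(x : 'I_(kdim m t)) (sp x \subset A)%:R = (#|A| ^ t)%:R :> R.
Proof.
elim: t => [|t IH].
  rewrite big_ord1 expn0.
  have -> : sp (ord0 : 'I_(kdim m 0)) = set0 by apply/setP => i; rewrite !inE.
  by rewrite sub0set.
rewrite expnS mulnC natrM -IH.
have -> : #|A|%:R = \sum_(j < m) (j \in A)%:R :> R.
  rewrite -sum1_card natr_sum big_mkcond; apply: eq_bigr => i _; by case: (i \in A).
rewrite mulr_sum; apply: eq_bigr => x _; rewrite -natrM mulnb.
by rewrite -[sp x \subset A]Qf_mem QfS Qf_mem.
Qed.

Section SetsWrap.
Local Close Scope ring_scope.

Section Sets.
Variable T : finType.

Lemma mem_imp (s : {perm T}) (A : {set T}) x : (x \in s @: A) = ((s^-1)%g x \in A).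
Proof. by rewrite -preim_permV inE. Qed.

Lemma imp_sub (s : {perm T}) (A B : {set T}) : (s @: A \subset s @: B) = (A \subset B).
Proof.
apply/subsetP/subsetP => h x.
  by move=> hx; have := h (s x); rewrite !mem_imp permK; apply.
by rewrite !mem_imp => /h.
Qed.

Lemma card_imp (s : {perm T}) (A : {set T}) : #|s @: A| = #|A|.
Proof. by rewrite card_imset //; apply: perm_inj. Qed.

Lemma perm_exists (A B : {set T}) : #|A| = #|B| -> exists s : {perm T}, s @: A = B.
Proof.
move: {2}#|A :\: B| (erefl #|A :\: B|) => n; elim: n A => [|n IH] A hn hAB.
  exists 1%g; rewrite imset_perm1; apply/eqP; rewrite eqEcard hAB leqnn andbT.
  by rewrite -setD_eq0 -cards_eq0 hn.
have : #|A :\: B| != 0 by rewrite hn.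
rewrite cards_eq0 => /set0Pn [a ha].
have hBA : #|B :\: A| = n.+1.
  by rewrite cardsD setIC -hn cardsD hAB.
have : #|B :\: A| != 0 by rewrite hBA.
rewrite cards_eq0 => /set0Pn [b hb].
move: ha hb; rewrite !inE => /andP [haB haA] /andP [hbA hbB].
pose A' := tperm a b @: A.
have memA' x : (x \in A') = (tperm a b x \in A) by rewrite /A' mem_imp tpermV.
have h1 : A' :\: B = (A :\: B) :\ a.
  apply/setP => x; rewrite !inE memA'.
  case: tpermP => [->|->|/eqP hxa /eqP hxb]; rewrite ?(negbTE hbA) ?eqxx ?hbB ?andbF ?hxa //.
have [s hs] : exists s : {perm T}, s @: A' = B.
  apply: IH; last by rewrite card_imp.
  apply/eqP; rewrite h1 -eqSS -hn (cardsD1 a (A :\: B)) !inE haB haA //.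
exists (tperm a b * s)%g.
rewrite -hs /A' -imset_comp; apply: eq_imset => x /=; by rewrite permM.
Qed.

Lemma cnt_super (U B : {set T}) k : U \subset B -> #|U| <= k ->
  #|[set X : {set T} | [&& #|X| == k, U \subset X & X \subset B]]| =
  'C(#|B| - #|U|, k - #|U|).
Proof.
move=> hUB hk.
rewrite -(cardsDS hUB) -cards_draws.
pose D := [set A : {set T} | A \subset B :\: U & #|A| == k - #|U|].
have -> : [set X : {set T} | [&& #|X| == k, U \subset X & X \subset B]] =
          (fun A => A :|: U) @: D.
  apply/setP => X; rewrite inE; apply/idP/imsetP.
    case/and3P => /eqP hX hUX hXB; exists (X :\: U); last by apply/esym; rewrite /= setUC -[in RHS](setID X U) (setIidPr hUX).
    by rewrite inE setSD //= cardsDS // hX.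
  case=> A; rewrite inE => /andP [hA /eqP hcA] ->.
  have hdis : A :&: U = set0.
    apply/setP => x; rewrite !inE; apply/negP => /andP [hx hxU].
    by have := subsetP hA x hx; rewrite inE hxU.
  rewrite cardsU hdis cards0 subn0 hcA subnK // subsetUr eqxx /=.
  rewrite subUset hUB andbT; apply: (subset_trans hA); exact: subsetDl.
rewrite card_in_imset // => A1 A2; rewrite !inE => /andP [h1 _] /andP [h2 _] e.
have dis (A : {set T}) : A \subset B :\: U -> (A :|: U) :\: U = A.
  move=> hA; apply/setP => x; rewrite !inE; case hx: (x \in A) => /=; last by case: (x \in U).
  by have := subsetP hA x hx; rewrite !inE => /andP [-> _].
by rewrite -(dis _ h1) e dis.
Qed.

End Sets.

End SetsWrap.


Lemma sum_cnt (T : finType) (P Q : pred T) :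
  (\sum_(X | P X) (Q X : nat))%N = #|[set X | P X && Q X]|.
Proof.
rewrite -sum1_card big_mkcond [RHS]big_mkcond; apply: eq_bigr => X _; rewrite inE.
by case: (P X); case: (Q X).
Qed.

Lemma sum_count (T : eqType) (s : seq T) (P : pred T) :
  (\sum_(X <- s) (P X : nat))%N = count P s.
Proof. by elim: s => [|a s IH]; rewrite ?big_nil ?big_cons ?IH. Qed.

Lemma card_sp_le m t (x : 'I_(kdim m t)) : (#|sp x| <= t)%N.
Proof. by rewrite /sp cardsE; have := card_size (crd x); rewrite size_crd. Qed.

Lemma gcoE (R : fieldType) m t l (x : 'I_(kdim m t)) : (t <= l)%N ->
  gco R l x = ('C(m, l)%:R)^-1 * ('C(m - #|sp x|, l - #|sp x|))%:R.
Proof.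
move=> htl; rewrite /gco -natr_sum sum_cnt; congr (_ * _%:R).
rewrite -[m in 'C(m - _, _)](card_ord m) -cardsT -(cnt_super (B := setT)) ?subsetT ?(leq_trans (card_sp_le x)) //.
by apply: eq_card => J; rewrite !inE subsetT andbT.
Qed.

Lemma dc m t l (lam : nat) (S : seq {set 'I_m}) (U : {set 'I_m}) :
  (forall B, B \in S -> #|B| = l) ->
  (forall T : {set 'I_m}, #|T| = t -> count (fun B : {set 'I_m} => T \subset B) S = lam) ->
  (#|U| <= t)%N ->
  (count (fun B : {set 'I_m} => U \subset B) S * 'C(l - #|U|, t - #|U|) =
   lam * 'C(m - #|U|, t - #|U|))%N.
Proof.
move=> hl hc hU.
set TS := [set T : {set 'I_m} | [&& #|T| == t, U \subset T & T \subset setT]].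
have e1 : (\sum_(T in TS) count (fun B : {set 'I_m} => T \subset B) S = lam * 'C(m - #|U|, t - #|U|))%N.
  rewrite (eq_bigr (fun _ => lam)) => [|T]; last by rewrite inE => /and3P [/eqP h _ _]; apply: hc.
  by rewrite sum_nat_const cnt_super ?subsetT // cardsT card_ord mulnC.
rewrite -e1.
under eq_bigr do rewrite -sum_count.
rewrite exchange_big /= -sum_count big_distrl /=; apply: eq_big_seq => B hB.
rewrite sum_cnt; case hUB: (U \subset B).
  rewrite mul1n -(hl B hB) -cnt_super //; apply: eq_card => T; rewrite !inE subsetT.
  by rewrite andbT andbA.
rewrite mul0n; apply/esym/eqP; rewrite cards_eq0; apply/eqP/setP => T; rewrite !inE subsetT andbT.
apply/negP => /andP [/andP [_ h1] h2]; by rewrite (subset_trans h1 h2) in hUB.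
Qed.


Lemma cntl m l (U : {set 'I_m}) : (#|U| <= l)%N ->
  #|[set J : {set 'I_m} | (#|J| == l) && (U \subset J)]| = 'C(m - #|U|, l - #|U|).
Proof.
move=> hU.
rewrite -[m in 'C(m - _, _)](card_ord m) -cardsT -(cnt_super (B := setT)) ?subsetT //.
by apply: eq_card => J; rewrite !inE subsetT andbT.
Qed.

Lemma count_enum (T : finType) (A : {set T}) (P : pred T) :
  count P (enum A) = #|[set X | (X \in A) && P X]|.
Proof. by rewrite -sum_count big_enum sum_cnt. Qed.

Lemma sum_const_seq (R : nmodType) (T : Type) (s : seq T) (c : R) :
  \sum_(i <- s) c = c *+ size s.
Proof. by elim: s => [|a s IH]; rewrite ?big_nil ?big_cons ?IH ?mulrS. Qed.

Unset Implicit Arguments.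

Theorem corollary3p16 (R : numFieldType) (m l t : nat) (S : seq {set 'I_m})
  (HS : size S != 0%N)
  (Hl : forall J, J \in S -> #|J| = l)
  (Ht : (0 < t)%N) (Htl : (t <= l)%N) :
  let lhs : R := ((size S)%:R ^+ 2)^-1 *
     \sum_(J <- S) \sum_(J' <- S) (#|J :&: J'| ^ t)%:R in
  let rhs : R := \tr (Dcoh R t l m *m Dcoh R t l m) in
  rhs <= lhs /\
  (lhs = rhs <->
   exists lambda : nat,
     is_block_design t l lambda S /\
     lambda%:R = (size S)%:R *
       \tr (Dcoh R t l m *m kron_prod (fun s => Ess R m s) t)).
Proof.
move=> lhs rhs.
set n := size S.
have [J0 hJ0] : exists J0, J0 \in S.
  by exists (nth set0 S 0); apply: mem_nth; rewrite lt0n.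
have hlm : (l <= m)%N by rewrite -(Hl J0 hJ0); have := max_card J0; rewrite card_ord.
have htm : (t <= m)%N := leq_trans Htl hlm.
pose f (x : 'I_(kdim m t)) : R := n%:R^-1 * \sum_(J <- S) (sp x \subset J)%:R.
pose g (x : 'I_(kdim m t)) : R := gco R l x.
have hn0 : n%:R != 0 :> R by rewrite pnatr_eq0.
have hC0 : ('C(m, l))%:R != 0 :> R by rewrite pnatr_eq0 -lt0n bin_gt0.
have gE x : g x = ('C(m, l)%:R)^-1 * ('C(m - #|sp x|, l - #|sp x|))%:R by apply: gcoE.
have fE x : f x = n%:R^-1 * (count (fun B : {set 'I_m} => sp x \subset B) S)%:R.
  by rewrite /f -sum_count natr_sum.
have hreal x : f x - g x \is Num.real.
  by rewrite fE gE realB // realM // ?realV realn.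
have Elhs : lhs = \sum_x f x ^+ 2.
  rewrite /lhs.
  under eq_bigr => J _ do under eq_bigr => J' _ do rewrite -(card_sp R t (J :&: J')).
  transitivity (((n%:R : R) ^+ 2)^-1 * \sum_(x : 'I_(kdim m t))
      ((\sum_(J <- S) (sp x \subset J)%:R) * (\sum_(J <- S) (sp x \subset J)%:R))).
    congr (_ * _).
    under eq_bigr => J _ do rewrite exchange_big /=.
    rewrite exchange_big /=; apply: eq_bigr => x _.
    rewrite mulr_suml; apply: eq_bigr => J _; rewrite mulr_sumr; apply: eq_bigr => J' _.
    by rewrite subsetI -natrM mulnb.
  rewrite mulr_sumr; apply: eq_bigr => x _; rewrite /f exprMn exprVn expr2.
  by [].
have Erhs : rhs = \sum_x g x ^+ 2.
  by rewrite /rhs DcohE tr_diag; apply: eq_bigr => x _; rewrite expr2.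
have key : \sum_x f x * g x = \sum_x g x * g x.
  pose h (J : {set 'I_m}) := \sum_(x : 'I_(kdim m t)) (sp x \subset J)%:R * g x.
  have hinv (J : {set 'I_m}) : #|J| = l -> h J = h J0.
    move=> hJ; have [s hs] : exists s : {perm 'I_m}, s @: J0 = J by apply: perm_exists; rewrite hJ Hl.
    rewrite /h -hs (reindex_inj (@pidx_inj m s t)); apply: eq_bigr => x _.
    by rewrite sp_pidx imp_sub !gE sp_pidx card_imp.
  transitivity (n%:R^-1 * \sum_(J <- S) h J).
    rewrite /h exchange_big mulr_sumr; apply: eq_bigr => x _.
    by rewrite /f -mulrA mulr_suml.
  transitivity (('C(m, l)%:R)^-1 * \sum_(J : {set 'I_m} | #|J| == l) h J); last first.
    rewrite /h exchange_big mulr_sumr; apply: eq_bigr => x _.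
    by rewrite {1}/g /gco -mulrA mulr_suml.
  rewrite (eq_big_seq (fun _ => h J0)); last by move=> J hJ; apply: hinv; apply: Hl.
  rewrite [in RHS](eq_bigr (fun _ => h J0)); last by move=> J /eqP; apply: hinv.
  rewrite sum_const_seq.
  rewrite (eq_bigl (fun J => J \in [set J : {set 'I_m} | #|J| == l])); last by move=> J; rewrite inE.
  rewrite sumr_const card_draws card_ord -/n.
  rewrite -[h J0 *+ n]mulr_natl -[h J0 *+ 'C(m, l)]mulr_natl !mulrA (mulVf hn0) (mulVf hC0).
  by [].
have Ediff : lhs - rhs = \sum_x (f x - g x) ^+ 2.
  rewrite Elhs Erhs.
  transitivity (\sum_x (f x ^+ 2 - g x ^+ 2) - 2%:R * \sum_x (f x * g x - g x * g x)).
    by rewrite [X in _ - 2%:R * X]sumrB key subrr mulr0 subr0 sumrB.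
  rewrite mulr_sumr -sumrB; apply: eq_bigr => x _; ring.
have Eeq : lhs = rhs <-> forall x, f x = g x.
  split => [h x|h].
    have h0 : \sum_x (f x - g x) ^+ 2 = 0 by rewrite -Ediff h subrr.
    have hge : forall i : 'I_(kdim m t), true -> 0 <= (f i - g i) ^+ 2.
      by move=> i _; rewrite -realEsqr.
    move: (psumr_eq0P hge h0 (i := x) isT) => /eqP.
    by rewrite sqrf_eq0 subr_eq0 => /eqP.
  by apply/eqP; rewrite -subr_eq0 Ediff big1 // => x _; rewrite h subrr expr0n.
split.
  by rewrite -subr_ge0 Ediff; apply: sumr_ge0 => x _; rewrite -realEsqr.
rewrite Eeq; split.
  move=> hfg.
  pose w0 := take t (enum 'I_m).
  have hw0 : size w0 = t by rewrite size_takel // size_enum_ord.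
  have [x0 hx0] : exists x0 : 'I_(kdim m t), crd x0 = w0 by apply: crd_surj.
  have hmap : map val w0 = iota 0 t by rewrite map_take val_enum_ord take_iota (minn_idPl htm).
  have hsp0 : #|sp x0| = t.
    rewrite /sp cardsE hx0 -hw0; apply/card_uniqP; apply: take_uniq; apply: enum_uniq.
  have trE : \tr (Dcoh R t l m *m kron_prod (fun s => Ess R m s) t) = g x0.
    rewrite DcohE EssE tr_diag (bigD1 x0) //= big1 ?addr0 => [|x hx].
      by rewrite hx0 hmap eqxx mulr1.
    case: eqP => [h|_]; last by rewrite mulr0.
    have : crd x = crd x0 by apply: (inj_map val_inj); rewrite h hx0 hmap.
    by move/crd_inj => e; rewrite e eqxx in hx.
  have ce y : (count (fun B : {set 'I_m} => sp y \subset B) S)%:R = n%:R * f y :> R.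
    by rewrite fE mulrA mulfV // mul1r.
  exists (count (fun B : {set 'I_m} => sp x0 \subset B) S); split; first split => //.
    move=> T hT.
    have [x hx] : exists x : 'I_(kdim m t), crd x = enum T by apply: crd_surj; rewrite -cardE hT.
    have hsx : sp x = T by rewrite /sp hx set_enum.
    apply/eqP; rewrite -(eqr_nat R) -hsx; apply/eqP.
    by rewrite !ce !hfg !gE hsx hT hsp0.
  by rewrite trE -hfg ce.
case=> lam [[_ hdes] _] x.
set U := sp x.
have hk : (#|U| <= t)%N := card_sp_le x.
pose S0 := enum [set J : {set 'I_m} | #|J| == l].
have hS0l : forall B, B \in S0 -> #|B| = l by move=> B; rewrite mem_enum inE => /eqP.
have hS0c (T : {set 'I_m}) : count (fun B : {set 'I_m} => T \subset B) S0 =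
    #|[set J : {set 'I_m} | (#|J| == l) && (T \subset J)]|.
  by rewrite count_enum; apply: eq_card => J; rewrite !inE.
have hS0d (T : {set 'I_m}) : #|T| = t -> count (fun B : {set 'I_m} => T \subset B) S0 = 'C(m - t, l - t).
  by move=> hT; rewrite hS0c cntl hT.
have c0 (s : seq {set 'I_m}) : count (fun B : {set 'I_m} => set0 \subset B) s = size s.
  by rewrite (@eq_count _ _ predT) ?count_predT // => B; rewrite sub0set.
have hk0 : (#|(set0 : {set 'I_m})| <= t)%N by rewrite cards0.
have e1 := dc Hl hdes hk.
have e2 := dc Hl hdes hk0.
have e3 := dc hS0l hS0d hk.
have e4 := dc hS0l hS0d hk0.
rewrite cards0 !subn0 c0 -/n in e2.
rewrite cards0 !subn0 c0 /S0 -cardE card_draws card_ord in e4.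
have gE' : g x = ('C(m, l)%:R)^-1 * (count (fun B : {set 'I_m} => U \subset B) S0)%:R.
  by rewrite hS0c /g /gco -natr_sum sum_cnt.
set a := count _ S in e1; set a0 := count _ S0 in e3 gE'.
have hcd : (0 < 'C(l - #|U|, t - #|U|) * 'C(l, t))%N.
  by rewrite muln_gt0 !bin_gt0 Htl leq_sub2r.
have keyn : (a * 'C(m, l) = a0 * n)%N.
  apply/eqP; rewrite -(eqn_pmul2r hcd) mulnACA e1 e4 [(a0 * n * _)%N]mulnACA e3 e2.
  apply/eqP; rewrite mulnACA [in RHS]mulnACA; congr (_ * _)%N; apply: mulnC.
rewrite fE gE' mulrC [RHS]mulrC; apply/eqP; rewrite eqr_div // -!natrM eqr_nat.
by rewrite keyn.
Qed.
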